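(* Let $G_1$ be a graph isomorphic to a minor of a weakly 4-connected graph $H$. Let $P=\{p_1,p_2\}$, $Q=\{q_1,q_2,q_3\}$ and $R$ form a partition of $V(G_1)$ such that $G_1$ contains all edges between $P$ and $Q$, no edge has both ends in $Q$, $|R|\ge2$, and $(P\cup Q,\,Q\cup R)$ is a non-trivial separation of $G_1$ of order three. Then $H$ has a minor isomorphic to a graph $G_1^+$ obtained from $G_1$ by either (1) adding an edge between $p_i$ and $r$ for some $i\in\{1,2\}$ and some $r\in R$, or (2) splitting $q_j$, for some $j\in\{1,2,3\}$, into two adjacent vertices $q_j^1,q_j^2$ such that $q_j^1$ is adjacent to $p_1$ and $q_j^2$ is adjacent to $p_2$.
   Context: Graphs are finite and simple. A separation of $G$ is a pair $(A,B)$ of subsets of $V(G)$ with $A\cup B=V(G)$ and no edge between $A-B$ and $B-A$; its order is $|A\cap B|$; it is non-trivial if $A\ne V(G)\ne B$. A graph is weakly 4-connected if it is 3-connected, has at least five vertices, and for every separation $(A,B)$ of order at most three one of $G[A]$, $G[B]$ has at most four edges. Splitting a vertex $v$: for a partition $(N_1,N_2)$ of the neighbours of $v$ with $|N_1|,|N_2|\ge2$, replace $v$ by two adjacent new vertices $v_1,v_2$ with $v_i$ adjacent to exactly the vertices of $N_i$. *)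

(* Defs.v *)
From mathcomp Require Import all_boot.
Set Implicit Arguments. Unset Strict Implicit. Unset Printing Implicit Defensive.

Section Graphs.
Variable T : finType.

Definition simple_graph (e : rel T) : Prop := symmetric e /\ irreflexive e.

Definition induced (e : rel T) (S : {set T}) : rel T :=
  [rel x y | [&& x \in S, y \in S & e x y]].

(* G[S] is connected (the empty graph counts as connected here) *)
Definition connected_in (e : rel T) (S : {set T}) : Prop :=
  forall x y, x \in S -> y \in S -> connect (induced e S) x y.

Definition k_connected (k : nat) (e : rel T) : Prop :=
  k < #|T| /\ forall X : {set T}, #|X| < k -> connected_in e (~: X).

Definition separation (e : rel T) (A B : {set T}) : Prop :=
  A :|: B = setT /\
  forall x y, x \in A :\: B -> y \in B :\: A -> ~~ e x y.

Definition sep_order (A B : {set T}) : nat := #|A :&: B|.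

Definition nontrivial_sep (A B : {set T}) : Prop := A != setT /\ B != setT.

Definition edges_in (e : rel T) (A : {set T}) : nat :=
  (#|[set p : T * T | [&& p.1 \in A, p.2 \in A & e p.1 p.2]]|)./2.

Definition weakly_4_connected (e : rel T) : Prop :=
  k_connected 3 e /\ 5 <= #|T| /\
  forall A B : {set T}, separation e A B -> sep_order A B <= 3 ->
    edges_in e A <= 4 \/ edges_in e B <= 4.

Definition add_edge (e : rel T) (a b : T) : rel T :=
  [rel x y | [|| e x y, (x == a) && (y == b) | (x == b) && (y == a)]].

Definition neighbours (e : rel T) (v : T) : {set T} := [set y | e v y].

Definition split_partition (e : rel T) (v : T) (N1 N2 : {set T}) : Prop :=
  N1 :|: N2 = neighbours e v /\ N1 :&: N2 = set0 /\ 2 <= #|N1| /\ 2 <= #|N2|.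

(* Splitting v along (N1,N2): vertex set option T, where Some v plays the role
   of v1 (adjacent to N1), None plays v2 (adjacent to N2), v1v2 is an edge,
   and Some x (x != v) are the other vertices. *)
Definition split_rel (e : rel T) (v : T) (N1 N2 : {set T}) : rel (option T) :=
  fun a b =>
    match a, b with
    | Some x, Some y =>
        if x == v then (y != v) && (y \in N1)
        else if y == v then x \in N1 else e x y
    | Some x, None => (x == v) || (x \in N2)
    | None, Some y => (y == v) || (y \in N2)
    | None, None => false
    end.

End Graphs.

Definition has_minor (U : finType) (f : rel U) (T : finType) (e : rel T) : Prop :=
  exists branch : T -> {set U},
    (forall x, branch x != set0) /\
    (forall x y, x != y -> [disjoint branch x & branch y]) /\
    (forall x, connected_in f (branch x)) /\
    (forall x y, e x y -> exists u v, [/\ u \in branch x, v \in branch y & f u v]).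

(* Main.v *)
Require Import Defs.
From mathcomp Require Import all_boot.
From Stdlib Require Import Classical.
From mathcomp Require Import zify.
Set Implicit Arguments. Unset Strict Implicit. Unset Printing Implicit Defensive.

Section Gen.
Variable U : finType.
Variable f : rel U.
Hypothesis fsym : symmetric f.

Lemma induced_sym (S : {set U}) : symmetric (induced f S).
Proof. by move=> x y; rewrite /induced /= andbCA fsym. Qed.

Lemma iconn_sym (S : {set U}) x y : connect (induced f S) x y = connect (induced f S) y x.
Proof. exact: (sym_connect_sym (induced_sym S)). Qed.

Lemma exit_path (r : rel U) (A : {set U}) x p :
  x \in A -> path r x p -> last x p \notin A ->
  exists u v, [/\ u \in A, v \notin A & r u v].
Proof.
elim: p x => [|y p IH] x xA /=; first by rewrite xA.
case/andP=> rxy pth lst.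
case: (boolP (y \in A)) => yA; first exact: IH yA pth lst.
by exists x, y.
Qed.

Lemma cross_edge (S C : {set U}) c1 c2 : connected_in f S -> c1 \in S -> c2 \in S ->
  c1 \in C -> c2 \notin C ->
  exists u v, [/\ u \in C, u \in S, v \in S, v \notin C & f u v].
Proof.
move=> cS c1S c2S c1C c2C.
have /connectP [p pth lst] := cS _ _ c1S c2S.
have := exit_path c1C pth; rewrite -lst => /(_ c2C) [u [v [uC vC /and3P [uS vS fuv]]]].
by exists u, v.
Qed.

Lemma iconn_mono (S S' : {set U}) x y : S \subset S' ->
  connect (induced f S) x y -> connect (induced f S') x y.
Proof.
move=> sub; apply: connect_sub => a b /and3P [aS bS fab].
by apply: connect1; rewrite /induced /= (subsetP sub _ aS) (subsetP sub _ bS).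
Qed.

Lemma conn_union (A B : {set U}) a b : connected_in f A -> connected_in f B ->
  a \in A -> b \in B -> f a b -> connected_in f (A :|: B).
Proof.
move=> cA cB aA bB fab.
have toa : forall x, x \in A :|: B -> connect (induced f (A :|: B)) a x.
  move=> x; rewrite inE => /orP [xA|xB].
    exact: iconn_mono (subsetUl A B) (cA _ _ aA xA).
  apply: (connect_trans (y := b)).
    by apply: connect1; rewrite /induced /= !inE aA bB orbT fab.
  exact: iconn_mono (subsetUr A B) (cB _ _ bB xB).
move=> x y xS yS; apply: (connect_trans (y := a)); last exact: toa.
by rewrite iconn_sym; exact: toa.
Qed.

Lemma conn1 x : connected_in f [set x].
Proof. by move=> a b; rewrite !inE => /eqP -> /eqP ->; exact: connect0. Qed.

Definition comp (S : {set U}) y := [set w in S | connect (induced f S) y w].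

Lemma comp_path (S : {set U}) y p x : path (induced f S) x p -> connect (induced f S) y x ->
  x \in S -> path (induced f (comp S y)) x p.
Proof.
elim: p x => [|z p IH] x //= /andP [/and3P [xS zS fxz] pth] cyx _.
have cyz : connect (induced f S) y z.
  by apply: connect_trans cyx (connect1 _); rewrite /induced /= xS zS.
by rewrite /induced /= !inE xS zS cyx cyz fxz /=; apply: IH.
Qed.

Lemma comp_conn (S : {set U}) y : y \in S -> connected_in f (comp S y).
Proof.
move=> yS.
have toy : forall w, w \in comp S y -> connect (induced f (comp S y)) y w.
  move=> w; rewrite inE => /andP [wS /connectP [p pth lst]].
  by apply/connectP; exists p => //; apply: comp_path => //; exact: connect0.
move=> a b aC bC; apply: (connect_trans (y := y)); last exact: toy.
by rewrite iconn_sym; exact: toy.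
Qed.

Lemma no_improve (X : Type) (P : X -> Prop) (m : X -> nat) (bound : nat) :
  (forall x, P x -> m x <= bound) ->
  (forall x, P x -> exists y, P y /\ m x < m y) -> forall x, ~ P x.
Proof.
move=> hb himp.
suff: forall k x, P x -> bound - m x <= k -> False by move=> H x Px; exact: H _ x Px (leqnn _).
elim=> [|k IH] x Px hk.
  have [y [Py lt]] := himp x Px.
  have := hb y Py; have := hb x Px. lia.
have [y [Py lt]] := himp x Px.
apply: (IH y Py); have := hb y Py; have := hb x Px. lia.
Qed.

Lemma grow_card (A A' : {set U}) w : A \subset A' -> w \in A' -> w \notin A -> #|A| < #|A'|.
Proof. by move=> s wA' wA; apply: proper_card; apply/properP; split => //; exists w. Qed.

End Gen.

Section Gen2.
Variable U : finType.
Variable f : rel U.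
Hypothesis fsym : symmetric f.

Lemma mkdisj (A B : {set U}) : (forall x, x \in A -> x \notin B) -> [disjoint A & B].
Proof. by move=> H; rewrite disjoint_subset; apply/subsetP => x /H; rewrite inE. Qed.

Lemma partition2 (K : {set U}) s s' : connected_in f K -> s \in K -> s' \in K -> s != s' ->
  exists C1 C2 : {set U}, [/\ C1 :|: C2 = K, [disjoint C1 & C2], connected_in f C1,
    connected_in f C2 & s \in C1 /\ s' \in C2].
Proof.
move=> cK sK s'K ss'.
apply: NNPP => H.
pose P (C2 : {set U}) := [/\ C2 \subset K, s' \in C2, s \notin C2 & connected_in f C2].
apply: (@no_improve _ P (fun C => #|C|) #|U| (fun C _ => max_card _) _ [set s']).
  move=> C2 [sub s'C2 sC2 cC2].
  have [C1 C1E] : {C1 : {set U} | C1 = K :\: C2} by exists (K :\: C2).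
  have C1K : C1 \subset K by rewrite C1E subsetDl.
  case: (classic (forall y, y \in C1 -> connect (induced f C1) s y)) => [all|].
    exfalso; apply: H; exists C1, C2; split.
    - apply/setP => x; rewrite C1E !inE; case: (boolP (x \in C2)) => xC2 /=; last by rewrite orbF.
      by rewrite (subsetP sub _ xC2).
    - by apply: mkdisj => x; rewrite C1E !inE; case/andP.
    - move=> a b aC bC; apply: (connect_trans (y := s)); last exact: all.
      by rewrite iconn_sym //; exact: all.
    - exact: cC2.
    - by rewrite C1E !inE sC2 sK.
  move=> /not_all_ex_not [y H0]; have [yC1 ncy] := imply_to_and _ _ H0.
  pose D := comp f C1 y.
  have yD : y \in D by rewrite /D /comp inE yC1 connect0.
  have DC1 : D \subset C1 by apply/subsetP => x; rewrite inE => /andP [].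
  have s'D : s' \notin D.
    by apply/negP => /(subsetP DC1); rewrite C1E !inE s'C2.
  have sD : s \notin D.
    apply/negP; rewrite inE => /andP [_ cys]; apply: ncy.
    by rewrite iconn_sym.
  have [u [v [uD uK vK vD fuv]]] := cross_edge cK (subsetP (subset_trans DC1 C1K) _ yD) s'K yD s'D.
  have vC2 : v \in C2.
    apply: contraNT vD => vC2.
    have vC1 : v \in C1 by rewrite C1E !inE vC2 vK.
    rewrite /D /comp inE vC1 /=.
    move: uD; rewrite inE => /andP [uC1 cyu].
    by apply: connect_trans cyu (connect1 _); rewrite /induced /= uC1 vC1 fuv.
  exists (C2 :|: D); split; last first.
    apply: (grow_card (w := y)); [exact: subsetUl | by rewrite inE yD orbT |].
    by move: yC1; rewrite C1E !inE => /andP [].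
  split.
  - by rewrite subUset sub (subset_trans DC1 C1K).
  - by rewrite inE s'C2.
  - by rewrite inE negb_or sC2 sD.
  - apply: (conn_union fsym cC2 (comp_conn fsym yC1) vC2 uD); by rewrite fsym.
by split; rewrite ?sub1set ?inE ?eqxx // 1?eq_sym //; exact: conn1.
Qed.

End Gen2.

Section Gen3.
Variable U : finType.
Variable f : rel U.
Hypothesis fsym : symmetric f.
Hypothesis firr : irreflexive f.

Lemma deg3 (k3 : k_connected 3 f) y : 3 <= #|[set z | f y z]|.
Proof.
case: k3 => big conn; rewrite leqNgt; apply/negP => small.
set N := [set z | f y z].
have yN : y \notin N by rewrite inE firr.
have : 0 < #|~: (y |: N)|.
  have := cardsC (y |: N); rewrite cardsU1 yN /= => HH.
  rewrite lt0n; apply/eqP => X0; move: HH; rewrite X0 addn0 add1n => HH.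
  by move: big; rewrite -HH ltnS leqNgt small.
rewrite card_gt0 => /set0Pn [z]; rewrite !inE negb_or => /andP [zy zN].
have yC : y \in ~: N by rewrite !inE firr.
have zC : z \in ~: N by rewrite !inE.
have /connectP [p pth lst] := conn N small y z yC zC.
have := @exit_path U _ [set y] y p (set11 y) pth.
rewrite -lst inE => /(_ zy) [u [v [uy vy /and3P [_ vN fuv]]]].
move: uy; rewrite inE => /eqP uy; subst u.
by move: vN; rewrite !inE fuv.
Qed.

Lemma nbrs_in (A B : {set U}) y z : separation f A B -> y \in B :\: A -> f y z -> z \in B.
Proof.
case=> AB H yBA fyz; apply: contraT => zB.
have zA : z \in A by have := in_setT z; rewrite -AB inE (negbTE zB) orbF.
have zAB : z \in A :\: B by rewrite inE zB zA.
have := H z y zAB yBA; by rewrite fsym fyz.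
Qed.

Lemma sep_sym (A B : {set U}) : separation f A B -> separation f B A.
Proof. by case=> AB H; split; [rewrite setUC | move=> x y xB yA; rewrite fsym; apply: H]. Qed.

Lemma two_of (A : {set U}) : 1 < #|A| -> exists a b, [/\ a \in A, b \in A & a != b].
Proof. by move/card_gt1P. Qed.

Lemma edges5 (k3 : k_connected 3 f) (A B : {set U}) y1 y2 :
  separation f A B -> y1 \in B :\: A -> y2 \in B :\: A -> y1 != y2 -> 5 <= edges_in f B.
Proof.
move=> sep y1B y2B y12.
have d1 := deg3 k3 y1; have d2 := deg3 k3 y2.
have [n1 [n2 [n1N n2N n12]]] : exists a b, [/\ a \in [set z | f y1 z] :\ y2, b \in [set z | f y1 z] :\ y2 & a != b].
  apply: two_of; have := cardsD1 y2 [set z | f y1 z]; lia.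
have [n3 n3N] : exists n3, n3 \in [set z | f y1 z] :\ n1 :\ n2.
  apply/set0Pn; rewrite -card_gt0.
  have := cardsD1 n1 [set z | f y1 z]; have := cardsD1 n2 ([set z | f y1 z] :\ n1).
  move: n1N n2N; rewrite !inE => /andP [_ ->] /andP [_ ->]; rewrite eq_sym n12 /=. lia.
have [m1 [m2 [m1N m2N m12]]] : exists a b, [/\ a \in [set z | f y2 z] :\ y1, b \in [set z | f y2 z] :\ y1 & a != b].
  apply: two_of; have := cardsD1 y1 [set z | f y2 z]; lia.
move: n1N n2N n3N m1N m2N; rewrite !inE.
move=> /andP [n1y2 f1] /andP [n2y2 f2] /and3P [n3n2 n3n1 f3] /andP [m1y1 g1] /andP [m2y1 g2].
have irr a b : f a b -> a != b by move=> h; apply: contraTneq h => ->; rewrite firr.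
have y1in : y1 \in B by move: y1B; rewrite inE => /andP [].
have y2in : y2 \in B by move: y2B; rewrite inE => /andP [].
have inB1 z : f y1 z -> z \in B by apply: nbrs_in sep y1B.
have inB2 z : f y2 z -> z \in B by apply: nbrs_in sep y2B.
pose s := [:: (y1,n1); (y1,n2); (y1,n3); (n1,y1); (n2,y1); (n3,y1); (y2,m1); (y2,m2); (m1,y2); (m2,y2)].
have us : uniq s.
  have := irr _ _ f1; have := irr _ _ f2; have := irr _ _ f3; have := irr _ _ g1; have := irr _ _ g2.
  move: y12 n1y2 n2y2 n3n2 n3n1 m1y1 m2y1 n12 m12.
  rewrite /s /= !inE !xpair_eqE !eqxx /=.
  move=> y12 n1y2 n2y2 n3n2 n3n1 m1y1 m2y1 n12 m12 i1 i2 i3 i4 i5.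
  have y12' := y12; rewrite eq_sym in y12'.
  have n1y2' := n1y2; rewrite eq_sym in n1y2'.
  have n2y2' := n2y2; rewrite eq_sym in n2y2'.
  have n3n2' := n3n2; rewrite eq_sym in n3n2'.
  have n3n1' := n3n1; rewrite eq_sym in n3n1'.
  have m1y1' := m1y1; rewrite eq_sym in m1y1'.
  have m2y1' := m2y1; rewrite eq_sym in m2y1'.
  have n12' := n12; rewrite eq_sym in n12'.
  have m12' := m12; rewrite eq_sym in m12'.
  have i1' := i1; rewrite eq_sym in i1'.
  have i2' := i2; rewrite eq_sym in i2'.
  have i3' := i3; rewrite eq_sym in i3'.
  have i4' := i4; rewrite eq_sym in i4'.
  have i5' := i5; rewrite eq_sym in i5'.
  rewrite ?(negbTE y12) ?(negbTE y12') ?(negbTE n1y2) ?(negbTE n1y2') ?(negbTE n2y2) ?(negbTE n2y2') ?(negbTE n3n2) ?(negbTE n3n2') ?(negbTE n3n1) ?(negbTE n3n1') ?(negbTE m1y1) ?(negbTE m1y1') ?(negbTE m2y1) ?(negbTE m2y1') ?(negbTE n12) ?(negbTE n12') ?(negbTE m12) ?(negbTE m12') ?(negbTE i1) ?(negbTE i1') ?(negbTE i2) ?(negbTE i2') ?(negbTE i3) ?(negbTE i3') ?(negbTE i4) ?(negbTE i4') ?(negbTE i5) ?(negbTE i5') /= ?andbF.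
  done.
have sub : {subset s <= [set p : U * U | [&& p.1 \in B, p.2 \in B & f p.1 p.2]]}.
  have n1B := inB1 _ f1; have n2B := inB1 _ f2; have n3B := inB1 _ f3.
  have m1B := inB2 _ g1; have m2B := inB2 _ g2.
  have f1' : f n1 y1 by rewrite fsym.
  have f2' : f n2 y1 by rewrite fsym.
  have f3' : f n3 y1 by rewrite fsym.
  have g1' : f m1 y2 by rewrite fsym.
  have g2' : f m2 y2 by rewrite fsym.
  move=> x; rewrite /s !inE => H.
  by repeat (case/orP: H => [/eqP -> | H]; first by rewrite /= ?y1in ?y2in ?n1B ?n2B ?n3B ?m1B ?m2B ?f1 ?f2 ?f3 ?g1 ?g2 ?f1' ?f2' ?f3' ?g1' ?g2');
    move/eqP: H => ->; rewrite /= ?y1in ?y2in ?n1B ?n2B ?n3B ?m1B ?m2B ?f1 ?f2 ?f3 ?g1 ?g2 ?f1' ?f2' ?f3' ?g1' ?g2'.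
rewrite /edges_in.
suff h : 10 <= #|[set p : U * U | [&& p.1 \in B, p.2 \in B & f p.1 p.2]]| by have := half_leq h.
have <- : size s = 10 by [].
rewrite -(card_uniqP us); apply: subset_leq_card; exact/subsetP.
Qed.

Lemma no_sep (W4 : weakly_4_connected f) (A B : {set U}) a1 a2 b1 b2 :
  separation f A B -> #|A :&: B| <= 3 ->
  a1 \in A :\: B -> a2 \in A :\: B -> a1 != a2 ->
  b1 \in B :\: A -> b2 \in B :\: A -> b1 != b2 -> False.
Proof.
case: W4 => k3 [_ Hw] sep ord a1A a2A a12 b1B b2B b12.
have eB := edges5 k3 sep b1B b2B b12.
have eA := edges5 k3 (sep_sym sep) a1A a2A a12.
case: (Hw A B sep ord) => h; [move: eA | move: eB]; rewrite ltnNge h //.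
Qed.
End Gen3.

Definition adj (U : finType) (f : rel U) (X Y : {set U}) :=
  exists u v, [/\ u \in X, v \in Y & f u v].
Definition adjb (U : finType) (f : rel U) (X Y : {set U}) :=
  [exists u, exists v, [&& u \in X, v \in Y & f u v]].
Definition is_model (U : finType) (f : rel U) (T : finType) (e : rel T) (B : T -> {set U}) :=
  (forall x, B x != set0) /\ (forall x y, x != y -> [disjoint B x & B y]) /\
  (forall x, connected_in f (B x)) /\ (forall x y, e x y -> adj f (B x) (B y)).

Section Adj.
Variable U : finType.
Variable f : rel U.
Hypothesis fsym : symmetric f.

Lemma adjP (X Y : {set U}) : reflect (adj f X Y) (adjb f X Y).
Proof.
apply: (iffP existsP) => [[u /existsP [v /and3P [a b c]]]|[u [v [a b c]]]].
  by exists u, v.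
by exists u; apply/existsP; exists v; rewrite a b c.
Qed.

Lemma adj_mono (X X' Y Y' : {set U}) : X \subset X' -> Y \subset Y' -> adj f X Y -> adj f X' Y'.
Proof. by move=> sX sY [u [v [uX vY fuv]]]; exists u, v; rewrite (subsetP sX _ uX) (subsetP sY _ vY). Qed.

Lemma adj_sym (X Y : {set U}) : adj f X Y -> adj f Y X.
Proof. by move=> [u [v [uX vY fuv]]]; exists v, u; rewrite fsym. Qed.

Lemma nonempty_U (A D : {set U}) : A != set0 -> A :|: D != set0.
Proof. by case/set0Pn => u uA; apply/set0Pn; exists u; rewrite inE uA. Qed.

End Adj.

Section Move.
Variable U : finType.
Variable f : rel U.
Hypothesis fsym : symmetric f.
Variable T : finType.
Variable e : rel T.
Hypothesis esym : symmetric e.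
Hypothesis eirr : irreflexive e.

Lemma dj_false (B : T -> {set U}) a b u : (forall x y, x != y -> [disjoint B x & B y]) ->
  a != b -> u \in B a -> u \in B b -> False.
Proof. by move=> dj ab ua ub; move: (disjointFr (dj a b ab) ua); rewrite ub. Qed.

Lemma move_model (B : T -> {set U}) (p q : T) (D C : {set U}) : is_model f e B -> p != q ->
  (forall t, t != q -> t != p -> [disjoint D & B t]) ->
  C \subset B q -> C != set0 -> connected_in f C -> [disjoint D & C] ->
  connected_in f (B p :|: D) ->
  (forall y, e q y -> adj f C (if y == p then B p :|: D else B y)) ->
  is_model f e (fun x => if x == p then B p :|: D else if x == q then C else B x).
Proof.
move=> [ne [dj [cn ed]]] pq HD CB Cne cC DC cPD Hq.
set B' := fun x => _.
have sub z : z != q -> B z \subset B' z.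
  move=> zq; rewrite /B'; case: eqP => [->|_]; first exact: subsetUl.
  by rewrite (negbTE zq).
have qp : q != p by rewrite eq_sym.
have sub2 z : B z \subset (if z == p then B p :|: D else B z).
  by case: (z =P p) => [->|_]; [exact: subsetUl | exact: subxx].
split; [|split; [|split]].
- move=> x; rewrite /B'; case: (x =P p) => _; first exact: nonempty_U (ne p).
  by case: (x =P q).
- move=> x y xy; apply: mkdisj => u; rewrite /B'.
  have CBq w : w \in C -> w \in B q by move/(subsetP CB).
  case: (eqVneq x p) => [Ex|xp]; case: (eqVneq y p) => [Ey|yp].
  + by move: xy; rewrite Ex Ey eqxx.
  + subst x; rewrite ?eqxx ?(negbTE yp) inE => /orP [uP|uD]; apply/negP.
      case: (eqVneq y q) => [Eyq|yq] /= uy.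
        exact: dj_false dj pq uP (CBq _ uy).
      by apply: dj_false dj _ uP uy; rewrite eq_sym.
    case: (eqVneq y q) => [Eyq|yq] /= uy.
      by move: (disjointFr DC uD); rewrite uy.
    by move: (disjointFr (HD y yq yp) uD); rewrite uy.
  + subst y; rewrite ?eqxx ?(negbTE xp) inE => ux; rewrite negb_or; apply/andP; split; apply/negP.
      case: (eqVneq x q) ux => [Exq|xq] /= ux uP.
        exact: dj_false dj pq uP (CBq _ ux).
      exact: dj_false dj xp ux uP.
    case: (eqVneq x q) ux => [Exq|xq] /= ux uD.
      by move: (disjointFr DC uD); rewrite ux.
    by move: (disjointFr (HD x xq xp) uD); rewrite ux.
  + rewrite ?(negbTE xp) ?(negbTE yp) => ux; apply/negP => uy.
    case: (eqVneq x q) ux => [Ex|xq] /= ux; case: (eqVneq y q) uy => [Ey|yq] /= uy.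
    * by move: xy; rewrite Ex Ey eqxx.
    * by apply: dj_false dj _ (CBq _ ux) uy; rewrite -Ex.
    * by apply: dj_false dj xq ux (CBq _ uy).
    * exact: dj_false dj xy ux uy.
- move=> x; rewrite /B'; case: (x =P p) => _ //; by case: (x =P q).
- move=> x y exy; rewrite /B'.
  case: (eqVneq x p) => [Ex|xp].
    subst x; rewrite ?eqxx; case: (eqVneq y q) => [Ey|yq].
      subst y; rewrite ?(negbTE pq) ?eqxx.
      have := Hq p; rewrite eqxx esym => /(_ exy) /(adj_sym fsym); by rewrite (negbTE qp).
    rewrite /=; exact: adj_mono (subsetUl _ _) (sub2 y) (ed _ _ exy).
  rewrite ?(negbTE xp); case: (eqVneq x q) => [Ex|xq].
    subst x; case: (eqVneq y q) => [Ey|yq]; first by move: exy; rewrite Ey eirr.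
    by rewrite ?eqxx; apply: Hq.
  case: (eqVneq y q) => [Ey|yq].
    subst y; have := Hq x; rewrite esym (negbTE xp) => /(_ exy) /(adj_sym fsym).
    by rewrite ?(negbTE qp) ?eqxx.
  rewrite /=; exact: adj_mono (subxx _) (sub2 y) (ed _ _ exy).
Qed.

Lemma addedge_model (B : T -> {set U}) p r : is_model f e B -> adj f (B p) (B r) ->
  is_model f (add_edge e p r) B.
Proof.
move=> [ne [dj [cn ed]]] H; split; [done|split; [done|split; [done|]]].
move=> x y; rewrite /add_edge /= => /or3P [h|/andP [/eqP-> /eqP->]|/andP [/eqP-> /eqP->]] //.
  exact: ed.
apply: (adj_sym fsym); exact: H.
Qed.

Lemma split_model (B : T -> {set U}) q (C1 C2 : {set U}) (N1 N2 : {set T}) :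
  is_model f e B -> C1 :|: C2 = B q -> [disjoint C1 & C2] -> C1 != set0 -> C2 != set0 ->
  connected_in f C1 -> connected_in f C2 -> adj f C1 C2 ->
  (forall y, y \in N1 -> y != q -> adj f C1 (B y)) ->
  (forall y, y \in N2 -> y != q -> adj f C2 (B y)) ->
  is_model f (split_rel e q N1 N2)
    (fun o => match o with Some x => if x == q then C1 else B x | None => C2 end).
Proof.
move=> [ne [dj [cn ed]]] CE C12 ne1 ne2 c1 c2 a12 H1 H2.
have C1B w : w \in C1 -> w \in B q by move=> h; rewrite -CE inE h.
have C2B w : w \in C2 -> w \in B q by move=> h; rewrite -CE inE h orbT.
split; [|split; [|split]].
- by case=> [x|] //=; case: (x == q).
- case=> [x|] [y|] //= xy.
  + have xy' : x != y by apply: contraNneq xy => ->.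
    apply: mkdisj => u.
    case: (eqVneq x q) => [Ex|xq] /=; case: (eqVneq y q) => [Ey|yq] /= ux; apply/negP => uy.
    * by move: xy'; rewrite Ex Ey eqxx.
    * by apply: dj_false dj _ (C1B _ ux) uy; rewrite -Ex.
    * exact: dj_false dj xq ux (C1B _ uy).
    * exact: dj_false dj xy' ux uy.
  + apply: mkdisj => u; case: (eqVneq x q) => [Ex|xq] /= ux; apply/negP => uy.
      by move: (disjointFr C12 ux); rewrite uy.
    exact: dj_false dj xq ux (C2B _ uy).
  + apply: mkdisj => u; case: (eqVneq y q) => [Ey|yq] /= ux; apply/negP => uy.
      by move: (disjointFr C12 uy); rewrite ux.
    exact: dj_false dj yq uy (C2B _ ux).
- by case=> [x|] //=; case: (x == q).
- case=> [x|] [y|] //=; rewrite /split_rel.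
  + case: (eqVneq x q) => [Ex|xq] /=.
      case/andP => yq yN1; rewrite (negbTE yq); exact: H1.
    case: (eqVneq y q) => [Ey|yq] /=.
      by move=> xN1; apply: (adj_sym fsym); apply: H1.
    exact: ed.
  + case: (eqVneq x q) => [Ex|xq] //= xN2.
    by apply: (adj_sym fsym); apply: H2.
  + case: (eqVneq y q) => [Ey|yq] //= yN2; first by apply: (adj_sym fsym).
    exact: H2.
Qed.
End Move.

Section Main.
Variables (U : finType) (f : rel U) (T : finType) (e : rel T) (p1 p2 q1 q2 q3 : T) (R : {set T}).
Hypothesis fsym : symmetric f.
Hypothesis firr : irreflexive f.
Hypothesis W4 : weakly_4_connected f.
Hypothesis esym : symmetric e.
Hypothesis eirr : irreflexive e.
Hypothesis Hu : uniq [:: p1; p2; q1; q2; q3].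
Hypothesis HR : R = ~: [set p1; p2; q1; q2; q3].
Hypothesis HPQ : forall p q, p \in [set p1; p2] -> q \in [set q1; q2; q3] -> e p q.
Hypothesis HQQ : forall q q', q \in [set q1; q2; q3] -> q' \in [set q1; q2; q3] -> ~~ e q q'.
Hypothesis HR2 : 2 <= #|R|.

Definition opt1 := exists p r, [/\ p \in [set p1; p2], r \in R & has_minor f (add_edge e p r)].
Definition opt2 := exists q (N1 N2 : {set T}),
     [/\ q \in [set q1; q2; q3], split_partition e q N1 N2,
         p1 \in N1, p2 \in N2 & has_minor f (split_rel e q N1 N2)].

Hypothesis NO1 : ~ opt1.
Hypothesis NO2 : ~ opt2.

Definition Pset (B : T -> {set U}) := B p1 :|: B p2.

Lemma dist : [/\ p1 != p2, [&& p1 != q1, p1 != q2 & p1 != q3], [&& p2 != q1, p2 != q2 & p2 != q3]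
   & [&& q1 != q2, q1 != q3 & q2 != q3]].
Proof.
move: Hu; rewrite /= !inE !negb_or.
case/andP=> /and4P [a b c d] /andP [/and3P [g h i] /andP [/andP [j k] /andP [l _]]].
by rewrite a b c d g h i j k l.
Qed.

Lemma p1R : p1 \notin R. Proof. by rewrite HR !inE eqxx. Qed.
Lemma p2R : p2 \notin R. Proof. by rewrite HR !inE eqxx !orbT. Qed.
Lemma QR q : q \in [set q1; q2; q3] -> q \notin R.
Proof. by rewrite HR !inE => /orP [/orP [/eqP ->|/eqP ->]|/eqP ->]; rewrite eqxx !orbT. Qed.

Lemma qp1 q : q \in [set q1; q2; q3] -> q != p1.
Proof.
case: dist => _ /and3P [a b c] _ _.
by rewrite !inE => /orP [/orP [/eqP ->|/eqP ->]|/eqP ->]; rewrite eq_sym.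
Qed.
Lemma qp2 q : q \in [set q1; q2; q3] -> q != p2.
Proof.
case: dist => _ _ /and3P [a b c] _.
by rewrite !inE => /orP [/orP [/eqP ->|/eqP ->]|/eqP ->]; rewrite eq_sym.
Qed.

Lemma Tcase t : [\/ t \in R, t = p1, t = p2 | t \in [set q1; q2; q3]].
Proof.
case: (boolP (t \in R)) => tR; first by apply: Or41.
move: tR; rewrite HR !inE negbK.
case: (eqVneq t p1) => [->|_]; first by move=> _; apply: Or42.
case: (eqVneq t p2) => [->|_]; first by move=> _; apply: Or43.
by rewrite /= => h; apply: Or44.
Qed.

Lemma nbq q y : q \in [set q1; q2; q3] -> e q y -> [\/ y = p1, y = p2 | y \in R].
Proof.
move=> qQ eqy; case: (Tcase y) => [yR|->|->|yQ].
- exact: Or33.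
- exact: Or31.
- exact: Or32.
by move: (HQQ qQ yQ); rewrite eqy.
Qed.

Lemma eqp1 q : q \in [set q1; q2; q3] -> e q p1.
Proof. by move=> qQ; rewrite esym; apply: HPQ => //; rewrite !inE eqxx. Qed.
Lemma eqp2 q : q \in [set q1; q2; q3] -> e q p2.
Proof. by move=> qQ; rewrite esym; apply: HPQ => //; rewrite !inE eqxx orbT. Qed.


Definition mv (B : T -> {set U}) p q (D C : {set U}) :=
  fun x => if x == p then B p :|: D else if x == q then C else B x.

Lemma move_grow (B : T -> {set U}) p q (D C : {set U}) w : p \in [set p1; p2] -> q \in [set q1; q2; q3] ->
  w \in D -> w \notin Pset B -> #|Pset B| < #|Pset (mv B p q D C)|.
Proof.
move=> pP qQ wD wP.
have sub x : x != q -> B x \subset mv B p q D C x.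
  move=> xq; rewrite /mv; case: (x =P p) => [->|_]; first exact: subsetUl.
  by rewrite (negbTE xq).
apply: (grow_card (w := w)) wP.
  apply: setUSS; apply: sub; rewrite eq_sym; [exact: qp1 | exact: qp2].
have wp : w \in mv B p q D C p by rewrite /mv eqxx inE wD orbT.
by move: pP; rewrite !inE => /orP [] /eqP pE; rewrite -pE wp ?orbT.
Qed.

Lemma case2 (B : T -> {set U}) i u w : is_model f e B -> i \in [set p1; p2] -> u \in B i -> f u w ->
  (forall t, w \notin B t) -> exists B', is_model f e B' /\ #|Pset B| < #|Pset B'|.
Proof.
move=> mB iP uB fuw hw.
have [ne [dj [cn ed]]] := mB.
have q1Q : q1 \in [set q1; q2; q3] by rewrite !inE eqxx.
have iq1 : i != q1.
  by move: iP; rewrite !inE => /orP [] /eqP ->; rewrite eq_sym; [exact: qp1 | exact: qp2].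
have dw t : [disjoint [set w] & B t].
  by apply: mkdisj => z; rewrite inE => /eqP ->; exact: hw.
exists (mv B i q1 [set w] (B q1)); split; last first.
  apply: move_grow => //; first by rewrite inE.
  by rewrite /Pset inE negb_or (hw p1) (hw p2).
apply: move_model => //.
- exact: (conn_union fsym (cn i) (@conn1 _ f w) uB (set11 w) fuw).
move=> y eqy; case: (y =P i) => [Eyi|_] /=; last exact: ed.
rewrite -Eyi; exact: adj_mono (subxx _) (subsetUl _ _) (ed _ _ eqy).
Qed.

Lemma case3 (B : T -> {set U}) q s s' u1 u2 : is_model f e B -> q \in [set q1; q2; q3] ->
  s \in B q -> s' \in B q -> u1 \in B p1 -> f u1 s -> u2 \in B p2 -> f u2 s' -> s != s' ->
  exists B', is_model f e B' /\ #|Pset B| < #|Pset B'|.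
Proof.
move=> mB qQ sB s'B u1B fu1 u2B fu2 ss'.
have [ne [dj [cn ed]]] := mB.
have [C1 [C2 [CE C12 cC1 cC2 [sC1 s'C2]]]] := partition2 fsym (cn q) sB s'B ss'.
have C1B : C1 \subset B q by rewrite -CE subsetUl.
have C2B : C2 \subset B q by rewrite -CE subsetUr.
have s'C1 : s' \notin C1 by rewrite (disjointFl C12 s'C2).
have [a [b [aC1 aB bB bC1 fab]]] := cross_edge (cn q) sB s'B sC1 s'C1.
have bC2 : b \in C2 by move: bB; rewrite -CE inE (negbTE bC1).
have a12 : adj f C1 C2 by exists a, b.
have q1' := qp1 qQ; have q2' := qp2 qQ.
have sP : s \notin Pset B.
  by rewrite /Pset inE negb_or (disjointFr (dj _ _ q1') sB) (disjointFr (dj _ _ q2') sB).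
have s'P : s' \notin Pset B.
  by rewrite /Pset inE negb_or (disjointFr (dj _ _ q1') s'B) (disjointFr (dj _ _ q2') s'B).
have C1ne : C1 != set0 by apply/set0Pn; exists s.
have C2ne : C2 != set0 by apply/set0Pn; exists s'.
have adjK r : adj f (B q) (B r) -> adj f C1 (B r) \/ adj f C2 (B r).
  case=> [x [y [xB yB fxy]]]; move: xB; rewrite -CE inE => /orP [xC|xC].
    by left; exists x, y.
  by right; exists x, y.
have HDq (C : {set U}) t : C \subset B q -> t != q -> [disjoint C & B t].
  move=> CB tq; apply: mkdisj => z zC; apply/negP => zt.
  by apply: dj_false dj tq zt (subsetP CB _ zC).
case: (classic (forall r, r \in R -> e q r -> adj f C2 (B r))) => [hA|nA].
  exists (mv B p1 q C1 C2); split; last by apply: (@move_grow B p1 q C1 C2 s) => //; rewrite !inE eqxx.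
  apply: (move_model fsym esym eirr) => //.
  - by rewrite eq_sym.
  - by move=> t tq _; apply: HDq.
  - exact: (conn_union fsym (cn p1) cC1 u1B sC1 fu1).
  move=> y eqy; case: (nbq qQ eqy) => [->|->|yR].
  - rewrite eqxx; apply: adj_mono (subxx _) (subsetUr _ _) _; apply: (adj_sym fsym); exact: a12.
  - case: dist => p12 _ _ _; rewrite eq_sym (negbTE p12).
    by exists s', u2; rewrite s'C2 u2B fsym.
  - have yp1 : y != p1 by apply: contraNneq p1R => <-.
    rewrite (negbTE yp1); exact: hA.
case: (classic (forall r, r \in R -> e q r -> adj f C1 (B r))) => [hB|nB].
  exists (mv B p2 q C2 C1); split; last by apply: (@move_grow B p2 q C2 C1 s') => //; rewrite !inE eqxx orbT.
  apply: (move_model fsym esym eirr) => //.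
  - by rewrite eq_sym.
  - by move=> t tq _; apply: HDq.
  - by rewrite disjoint_sym.
  - exact: (conn_union fsym (cn p2) cC2 u2B s'C2 fu2).
  move=> y eqy; case: (nbq qQ eqy) => [->|->|yR].
  - case: dist => p12 _ _ _; rewrite (negbTE p12).
    by exists s, u1; rewrite sC1 u1B fsym.
  - rewrite eqxx; apply: adj_mono (subxx _) (subsetUr _ _) _; exact: a12.
  - have yp2 : y != p2 by apply: contraNneq p2R => <-.
    rewrite (negbTE yp2); exact: hB.
move: nA => /not_all_ex_not [r1 H1]; have [r1R H1'] := imply_to_and _ _ H1; have [eq1 n1] := imply_to_and _ _ H1'.
move: nB => /not_all_ex_not [r2 H2]; have [r2R H2'] := imply_to_and _ _ H2; have [eq2 n2] := imply_to_and _ _ H2'.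
have a1 : adj f C1 (B r1) by case: (adjK _ (ed _ _ eq1)).
have a2 : adj f C2 (B r2) by case: (adjK _ (ed _ _ eq2)).
exfalso; apply: NO2.
pose N1 := p1 |: [set r in R | e q r && adjb f C1 (B r)].
pose N2 := p2 |: [set r in R | e q r && ~~ adjb f C1 (B r)].
have p1N1 : p1 \in N1 by rewrite setU11.
have p2N2 : p2 \in N2 by rewrite setU11.
have p12 : p1 != p2 by case: dist.
have r1p1 : r1 != p1 by apply: contraNneq p1R => <-.
have r2p2 : r2 != p2 by apply: contraNneq p2R => <-.
exists q, N1, N2; split => //.
- split; [| split; [| split]].
  + apply/setP => y; rewrite /neighbours !inE.
    case: (Tcase y) => [yR|->|->|yQ].
    * have yp1 : y != p1 by apply: contraNneq p1R => <-.
      have yp2 : y != p2 by apply: contraNneq p2R => <-.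
      rewrite (negbTE yp1) (negbTE yp2) yR /=.
      by case: (e q y); case: (adjb f C1 (B y)).
    * by rewrite eqxx eqp1.
    * by rewrite eqxx orbT eqp2.
    * rewrite (negbTE (qp1 yQ)) (negbTE (qp2 yQ)) (negbTE (QR yQ)) /=.
      by rewrite (negbTE (HQQ qQ yQ)).
  + apply/setP => y; rewrite !inE.
    case: (Tcase y) => [yR|->|->|yQ].
    * have yp1 : y != p1 by apply: contraNneq p1R => <-.
      have yp2 : y != p2 by apply: contraNneq p2R => <-.
      rewrite (negbTE yp1) (negbTE yp2) yR /=.
      by case: (e q y); case: (adjb f C1 (B y)).
    * by rewrite eqxx (negbTE p12) (negbTE p1R) !andbF.
    * by rewrite eqxx eq_sym (negbTE p12) (negbTE p2R).
    * by rewrite (negbTE (qp1 yQ)) (negbTE (qp2 yQ)) (negbTE (QR yQ)).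
  + apply/card_gt1P; exists p1, r1; split => //.
    by rewrite !inE r1R eq1 /=; apply/orP; right; apply/adjP.
    by rewrite eq_sym.
  + apply/card_gt1P; exists p2, r2; split => //.
    by rewrite !inE r2R eq2 /=; apply/orP; right; apply/negP => /adjP.
    by rewrite eq_sym.
- exists (fun o => match o with Some x => if x == q then C1 else B x | None => C2 end).
  apply: (split_model fsym) => //.
  + move=> y; rewrite !inE => /orP [/eqP ->|/and3P [_ _ /adjP //]] _.
    by exists s, u1; rewrite sC1 u1B fsym.
  + move=> y; rewrite !inE => /orP [/eqP ->|/and3P [_ eqy /negP na]] _.
      by exists s', u2; rewrite s'C2 u2B fsym.
    by case: (adjK _ (ed _ _ eqy)) => // /adjP.
Qed.

Lemma improve (B : T -> {set U}) : is_model f e B ->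
  exists B', is_model f e B' /\ #|Pset B| < #|Pset B'|.
Proof.
move=> mB; have [ne [dj [cn ed]]] := mB.
have p12 : p1 != p2 by case: dist.
case: (classic (exists i r, [/\ i \in [set p1; p2], r \in R & adj f (B i) (B r)]))
  => [[i [r [iP rR a]]]|n1].
  exfalso; apply: NO1; exists i, r; split => //; exists B.
  exact: (addedge_model fsym mB a).
case: (classic (exists i u w, [/\ i \in [set p1; p2], u \in B i, f u w & forall t, w \notin B t]))
  => [[i [u [w [iP uB fuw hw]]]]|n2].
  exact: case2 mB iP uB fuw hw.
case: (classic (exists q s s' u1 u2, [/\ q \in [set q1; q2; q3], s \in B q, s' \in B q,
         [/\ u1 \in B p1, f u1 s, u2 \in B p2 & f u2 s'] & s != s']))
  => [[q [s [s' [u1 [u2 [qQ sB s'B [u1B fu1 u2B fu2] ss']]]]]]|n3].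
  exact: case3 mB qQ sB s'B u1B fu1 u2B fu2 ss'.
exfalso.
have hx q : q \in [set q1; q2; q3] -> exists x, x \in B q /\
    forall w, w \in B q -> (exists u, u \in Pset B /\ f u w) -> w = x.
  move=> qQ.
  have p1P : p1 \in [set p1; p2] by rewrite !inE eqxx.
  have p2P : p2 \in [set p1; p2] by rewrite !inE eqxx orbT.
  have [v1 [x [v1B xB fvx]]] := ed _ _ (HPQ p1P qQ).
  have [v2 [y [v2B yB fvy]]] := ed _ _ (HPQ p2P qQ).
  have key s s' : s \in B q -> s' \in B q -> (exists u, u \in B p1 /\ f u s) ->
      (exists u, u \in B p2 /\ f u s') -> s = s'.
    move=> sB s'B [a [aB fa]] [b [bB fb]]; case: (eqVneq s s') => // ss'.
    by exfalso; apply: n3; exists q, s, s', a, b; split.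
  have xy : x = y by apply: key => //; [exists v1 | exists v2].
  exists x; split => // w wB [u [uP fuw]].
  move: uP; rewrite /Pset inE => /orP [uB1|uB2].
    by rewrite xy; apply: key => //; [exists u | exists v2].
  by symmetry; apply: key => //; [exists v1 | exists u].
have q1Q : q1 \in [set q1; q2; q3] by rewrite !inE eqxx.
have q2Q : q2 \in [set q1; q2; q3] by rewrite !inE eqxx orbT.
have q3Q : q3 \in [set q1; q2; q3] by rewrite !inE eqxx !orbT.
have [x1 [x1B h1]] := hx q1 q1Q.
have [x2 [x2B h2]] := hx q2 q2Q.
have [x3 [x3B h3]] := hx q3 q3Q.
have [u1 u1B] := set0Pn _ (ne p1).
have [u2 u2B] := set0Pn _ (ne p2).
have [r [r' [rR r'R rr']]] := two_of HR2.
have [y1 y1B] := set0Pn _ (ne r).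
have [y2 y2B] := set0Pn _ (ne r').
have rp1 : r != p1 by apply: contraNneq p1R => <-.
have rp2 : r != p2 by apply: contraNneq p2R => <-.
have r'p1 : r' != p1 by apply: contraNneq p1R => <-.
have r'p2 : r' != p2 by apply: contraNneq p2R => <-.
have notP y t : t != p1 -> t != p2 -> y \in B t -> y \notin Pset B.
  move=> tp1 tp2 yB; rewrite /Pset inE negb_or.
  by rewrite (disjointFr (dj _ _ tp1) yB) (disjointFr (dj _ _ tp2) yB).
have notX y t : t \in R -> y \in B t -> y \notin [set x1; x2; x3].
  move=> tR yB; rewrite !inE; apply/negP => /orP [/orP [/eqP E|/eqP E]|/eqP E]; subst y.
  - have tq : t != q1 by apply: contraNneq (QR q1Q) => <-.
    by move: (disjointFr (dj _ _ tq) yB); rewrite x1B.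
  - have tq : t != q2 by apply: contraNneq (QR q2Q) => <-.
    by move: (disjointFr (dj _ _ tq) yB); rewrite x2B.
  - have tq : t != q3 by apply: contraNneq (QR q3Q) => <-.
    by move: (disjointFr (dj _ _ tq) yB); rewrite x3B.
pose X := Pset B :|: [set x1; x2; x3].
pose Y := ~: Pset B.
apply: (@no_sep U f fsym firr W4 X Y u1 u2 y1 y2).
- split.
    by apply/setP => z; rewrite !inE; case: ((z \in B p1) || (z \in B p2)); rewrite ?orbT.
  move=> z z'; rewrite !inE negbK => /andP [zP _] /andP [z'X z'P]; apply/negP => fzz'.
  have [i [iP zB]] : exists i, i \in [set p1; p2] /\ z \in B i.
    move: zP => /orP [h|h].
      by exists p1; rewrite !inE eqxx.
    by exists p2; rewrite !inE eqxx orbT.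
  have [t z't] : exists t, z' \in B t.
    apply: NNPP => h; apply: n2; exists i, z, z'; split => // t.
    by apply/negP => zt; apply: h; exists t.
  have adjP' : exists u, u \in Pset B /\ f u z'.
    exists z; split => //; move: iP; rewrite !inE => /orP [] /eqP E; subst i; by rewrite ?inE zB ?orbT.
  case: (Tcase t) => [tR|tE|tE|tQ].
  + by apply: n1; exists i, t; split => //; exists z, z'.
  + by move: z'P; rewrite -tE z't.
  + by move: z'P; rewrite -tE z't orbT.
  + move: z'X; move: tQ; rewrite !inE => /orP [/orP [/eqP E|/eqP E]|/eqP E]; subst t.
    * by rewrite (h1 _ z't adjP') eqxx !orbT.
    * by rewrite (h2 _ z't adjP') eqxx !orbT.
    * by rewrite (h3 _ z't adjP') eqxx !orbT.
- have sub : X :&: Y \subset [set x1; x2; x3].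
    apply/subsetP => z; rewrite !inE => /andP [/orP [h|h] nP] //.
    by move: nP; rewrite h.
  apply: leq_trans (subset_leq_card sub) _.
  rewrite (_ : [set x1; x2; x3] = x1 |: (x2 |: [set x3])); last first.
    by apply/setP => z; rewrite !inE orbA.
  rewrite cardsU1 cardsU1 cards1.
  by case: (_ \notin _); case: (_ \notin _).
- by rewrite !inE u1B.
- by rewrite !inE u2B orbT.
- by apply/negP => /eqP E; subst u2; move: (disjointFr (dj _ _ p12) u1B); rewrite u2B.
- move: (notP _ _ rp1 rp2 y1B) (notX _ _ rR y1B); rewrite !inE !negb_or.
  by move=> /andP [-> ->] /andP [/andP [-> ->] ->].
- move: (notP _ _ r'p1 r'p2 y2B) (notX _ _ r'R y2B); rewrite !inE !negb_or.
  by move=> /andP [-> ->] /andP [/andP [-> ->] ->].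
- by apply/negP => /eqP E; subst y2; move: (disjointFr (dj _ _ rr') y1B); rewrite y2B.
Qed.

Lemma final : has_minor f e -> False.
Proof.
move=> [B mB].
apply: (@no_improve _ (is_model f e) (fun B => #|Pset B|) #|U| _ improve B mB).
by move=> x _; exact: max_card.
Qed.

End Main.

Theorem lemma4p6 (U : finType) (f : rel U) (T : finType) (e : rel T)
  (p1 p2 q1 q2 q3 : T) (R : {set T}) :
  simple_graph f -> weakly_4_connected f ->
  simple_graph e -> has_minor f e ->
  (* P = {p1,p2}, Q = {q1,q2,q3}, R partition V(G1) *)
  uniq [:: p1; p2; q1; q2; q3] ->
  R = ~: [set p1; p2; q1; q2; q3] ->
  (* all edges between P and Q *)
  (forall p q, p \in [set p1; p2] -> q \in [set q1; q2; q3] -> e p q) ->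
  (* no edge inside Q *)
  (forall q q', q \in [set q1; q2; q3] -> q' \in [set q1; q2; q3] -> ~~ e q q') ->
  2 <= #|R| ->
  separation e ([set p1; p2] :|: [set q1; q2; q3]) ([set q1; q2; q3] :|: R) ->
  nontrivial_sep ([set p1; p2] :|: [set q1; q2; q3]) ([set q1; q2; q3] :|: R) ->
  sep_order ([set p1; p2] :|: [set q1; q2; q3]) ([set q1; q2; q3] :|: R) = 3 ->
  (exists p r, [/\ p \in [set p1; p2], r \in R & has_minor f (add_edge e p r)])
  \/
  (exists q (N1 N2 : {set T}),
     [/\ q \in [set q1; q2; q3], split_partition e q N1 N2,
         p1 \in N1, p2 \in N2 & has_minor f (split_rel e q N1 N2)]).
Proof.
move=> [fsym firr] W4 [esym eirr] hm Hu HR HPQ HQQ HR2 _ _ _.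
apply: NNPP => H.
apply: (final fsym firr W4 esym eirr Hu HR HPQ HQQ HR2 _ _ hm).
- by move=> h; apply: H; left.
- by move=> h; apply: H; right.
Qed.
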